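(* Let $G=(V,E)$ be a finite multigraph and suppose the vertices $v\neq w\in V$ form a 3-connection in $G$, i.e. $\lambda_G(v,w)\ge3$. If a partition $\pi$ of $V$ is such that the quotient $G^\pi$ is a cactus, then $v$ and $w$ lie in the same block of $\pi$.
   Context: $\lambda_G(v,w)$ is the minimal number of edges whose deletion disconnects $v$ and $w$ (equivalently the maximal number of edge-disjoint paths between them). $G^\pi$ identifies the vertices in each block of $\pi$. A cactus is a connected multigraph in which every edge belongs to exactly one simple cycle (loops and pairs of parallel edges count as cycles). *)

(* Defs.v *)
From mathcomp Require Import all_boot.
Set Implicit Arguments. Unset Strict Implicit. Unset Printing Implicit Defensive.

(* A finite multigraph: finite vertex type V, finite edge type E, and an
   endpoint map ends : E -> V * V (loops = edges with equal endpoints,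
   parallel edges = distinct edges with the same endpoints). *)

Section MGraph.
Variables (V E : finType) (ends : E -> V * V).

Definition joins (e : E) (x y : V) : bool :=
  (ends e == (x, y)) || (ends e == (y, x)).

Definition adj_avoid (F : {set E}) : rel V :=
  fun x y => [exists e, (e \notin F) && joins e x y].

Definition edge_conn_ge (k : nat) (v w : V) : Prop :=
  forall F : {set E}, #|F| < k -> connect (adj_avoid F) v w.

Definition mconnected : Prop :=
  forall x y : V, connect (adj_avoid set0) x y.

(* C is the edge set of a simple cycle: a closed walk
   vs_0 -es_0- vs_1 - ... - vs_{k-1} -es_{k-1}- vs_0 with k >= 1,
   distinct vertices and distinct edges (loops: k = 1; pairs of parallel
   edges: k = 2). *)
Definition is_cycle_edgeset (C : {set E}) : Prop :=
  exists (vs : seq V) (es : seq E),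
    [/\ 0 < size vs, size es = size vs, uniq vs && uniq es,
        all (fun p => joins p.2 p.1.1 p.1.2) (zip (zip vs (rot 1 vs)) es)
      & C = [set e in es]].

Definition cactus : Prop :=
  mconnected /\
  forall e : E, exists! C : {set E}, is_cycle_edgeset C /\ e \in C.

End MGraph.

(* quotient G^pi, where the partition pi of V is given by the fibres of a
   surjection f : V -> K (blocks indexed by K); edges are kept. *)
Definition quot_ends (V E K : finType) (ends : E -> V * V) (f : V -> K) :
  E -> K * K := fun e => (f (ends e).1, f (ends e).2).

(* Main.v *)
Require Import Defs.
From mathcomp Require Import all_boot.
From mathcomp Require Import zify.
Set Implicit Arguments. Unset Strict Implicit. Unset Printing Implicit Defensive.

Section Gen.
Variables (V E : finType) (ends : E -> V * V).

Lemma joins_sym e x y : joins ends e x y = joins ends e y x.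
Proof. by rewrite /joins orbC. Qed.

Lemma joins_eq e x y x' y' : joins ends e x y -> joins ends e x' y' ->
  (x = x' /\ y = y') \/ (x = y' /\ y = x').
Proof.
rewrite /joins => /orP[/eqP->|/eqP->] /orP[/eqP[->->]|/eqP[->->]]; auto.
Qed.

Lemma adj_sym F : symmetric (adj_avoid ends F).
Proof.
move=> x y; rewrite /adj_avoid; apply/existsP/existsP => -[e He]; exists e;
  by move: He; rewrite joins_sym.
Qed.

Lemma path_edges F x p y e0 :
  path (adj_avoid ends F) x p -> uniq (x :: p) -> joins ends e0 (last x p) y ->
  exists gs : seq E, [/\ size gs = size p, all (fun g => g \notin F) gs,
    uniq gs,
    (forall g, g \in gs -> exists u u', [/\ u \in x :: p, u' \in x :: p & joins ends g u u'])
  & all (fun q => joins ends q.2 q.1.1 q.1.2) (zip (zip (x :: p) (rcons p y)) (rcons gs e0))].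
Proof.
elim: p x => [|z p IH] x /=.
  by move=> _ _ He; exists [::]; rewrite /= He.
move=> /andP[Hxz Hp] /andP[xn Hu] Hl.
have [gs [Hs Hf Hgu Hg Hall]] := IH z Hp Hu Hl.
move: Hxz; rewrite /adj_avoid => /existsP[g /andP[gF Hj]].
exists (g :: gs); split => //=.
- by rewrite Hs.
- by rewrite gF.
- rewrite Hgu andbT; apply/negP => /Hg [u [u' [Hu1 Hu2 Hj']]].
  case: (joins_eq Hj Hj') => -[E1 E2].
  + by rewrite E1 Hu1 in xn.
  + by rewrite E1 Hu2 in xn.
- move=> g'; rewrite inE => /orP[/eqP->|/Hg [u [u' [Hu1 Hu2 Hj']]]].
  + by exists x, z; rewrite !inE !eqxx ?orbT.
  + by exists u, u'; split => //; rewrite in_cons ?Hu1 ?Hu2 orbT.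
- by rewrite Hj.
Qed.

Lemma cactus_cut (a c : V) (e e' : E) (C : {set E}) :
  (exists! C, is_cycle_edgeset ends C /\ e \in C) ->
  is_cycle_edgeset ends C -> e \in C -> e' \in C -> e' != e -> joins ends e a c ->
  ~~ connect (adj_avoid ends [set e; e']) a c.
Proof.
move=> [C0 [_ HU]] HC eC e'C ne Hj; apply/negP => /connectP[p Hp Hl].
case: (shortenP Hp) Hl => p' Hp' Hu _ Hl.
have Hj2 : joins ends e (last a p') a by rewrite -Hl joins_sym.
have [gs [Hs Hf Hgu _ Hall]] := path_edges Hp' Hu Hj2.
have eg : e \notin gs.
  by apply/negP => /(allP Hf); rewrite !inE eqxx.
have Hc' : is_cycle_edgeset ends [set g in rcons gs e].
  exists (a :: p'), (rcons gs e); split => //.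
  - by rewrite size_rcons Hs.
  - by rewrite Hu rcons_uniq eg Hgu.
  - by rewrite rot1_cons.
have E1 := HU C (conj HC eC).
have E2 := HU _ (conj Hc' (_ : e \in [set g in rcons gs e])).
have : e' \in [set g in rcons gs e].
  rewrite -E2; first by rewrite E1.
  by rewrite inE mem_rcons inE eqxx.
rewrite inE mem_rcons inE (negPf ne) /= => /(allP Hf).
by rewrite !inE eqxx orbT.
Qed.

Lemma nth_rot1 (T : Type) (x0 : T) vs i : i < size vs ->
  nth x0 (rot 1 vs) i = nth x0 vs (if i.+1 < size vs then i.+1 else 0).
Proof.
case: vs => [|x s] //= ilt; rewrite rot1_cons nth_rcons ltnS.
case: ltnP => //= H; have -> : i = size s by lia.
by rewrite eqxx.
Qed.

Lemma cycle_next C e a c : is_cycle_edgeset ends C -> e \in C -> joins ends e a c ->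
  a != c -> exists e', [/\ e' \in C, e' != e & exists d, joins ends e' a d].
Proof.
case=> vs [es [Hk Hs /andP[Uv Ue] Hall HCe]] eC Hj ac.
set k := size vs.
have nxt : forall i, i < k -> joins ends (nth e es i) (nth a vs i)
    (nth a vs (if i.+1 < k then i.+1 else 0)).
  move=> i ik; have := all_nthP ((a, a), e) Hall i.
  rewrite !size_zip size_rot Hs !minnn => /(_ ik).
  rewrite nth_zip ?size_zip ?size_rot ?Hs ?minnn // nth_zip ?size_rot //=.
  by rewrite nth_rot1.
move: eC; rewrite HCe inE => eC.
set i := index e es.
have ik : i < k by rewrite /k -Hs index_mem.
have ei : nth e es i = e by rewrite nth_index.
have J := nxt i ik; rewrite ei in J.
have k2 : 1 < k.
  rewrite ltnNge; apply/negP => k1.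
  have i0 : i = 0 by lia.
  have : ~~ (i.+1 < k) by lia.
  move/negPf => H; rewrite H i0 in J.
  by case: (joins_eq Hj J) => -[E1 E2]; move: ac; rewrite E1 E2 eqxx.
have esk : size es = k by rewrite Hs.
case: (joins_eq Hj J) => -[Ea Ec].
- set j := if i == 0 then k.-1 else i.-1.
  have jk : j < k by rewrite /j; case: ifP => _; lia.
  have sj : (if j.+1 < k then j.+1 else 0) = i.
    rewrite /j; have [H|H] := eqVneq i 0; rewrite ?H /=;
    case: ifP => H2; lia.
  have J' := nxt j jk; rewrite sj -Ea in J'.
  exists (nth e es j); split.
  + by rewrite inE mem_nth // esk.
  + rewrite -[X in _ != X]ei nth_uniq ?esk //; rewrite /j.
    by have [H|H] := eqVneq i 0; rewrite ?H /=; lia.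
  + by exists (nth a vs j); rewrite joins_sym.
- set j := if i.+1 < k then i.+1 else 0.
  have jk : j < k by rewrite /j; case: ifP => H; lia.
  have J' := nxt j jk; rewrite -Ea in J'.
  exists (nth e es j); split.
  + by rewrite inE mem_nth // esk.
  + by rewrite -[X in _ != X]ei nth_uniq ?esk //; rewrite /j; case: ifP => H; lia.
  + by exists (nth a vs (if j.+1 < k then j.+1 else 0)).
Qed.

End Gen.

Lemma lift_path (V E K : finType) (ends : E -> V * V) (f : V -> K) F x p :
  path (adj_avoid ends F) x p -> path (adj_avoid (quot_ends ends f) F) (f x) (map f p).
Proof.
elim: p x => //= z p IH x /andP[Hxz Hp]; rewrite IH // andbT.
move: Hxz; rewrite /adj_avoid => /existsP[g /andP[gF Hj]].
apply/existsP; exists g; rewrite gF /=; move: Hj.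
by rewrite /joins /quot_ends => /orP[/eqP->|/eqP->]; rewrite eqxx ?orbT.
Qed.

Lemma lift_connect (V E K : finType) (ends : E -> V * V) (f : V -> K) F x y :
  connect (adj_avoid ends F) x y -> connect (adj_avoid (quot_ends ends f) F) (f x) (f y).
Proof.
move/connectP=> [p Hp ->]; apply/connectP; exists (map f p).
  exact: lift_path.
by rewrite last_map.
Qed.

Theorem lemma2p5 (V E : finType) (ends : E -> V * V) (v w : V)
  (K : finType) (f : V -> K) :
  v != w ->
  edge_conn_ge ends 3 v w ->
  (forall k : K, exists x : V, f x = k) ->
  cactus (quot_ends ends f) ->
  f v = f w.
Proof.
move=> vw Hconn _ [_ Hcyc]; apply/eqP; apply: contraT => ab.
set H := quot_ends ends f.
have C0 : connect (adj_avoid H set0) (f v) (f w).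
  by apply: lift_connect; apply: Hconn; rewrite cards0.
case/connectP: C0 => p0 Hp0 Hl0.
case: (shortenP Hp0) Hl0 => p Hp Hu _ Hl.
case: p Hp Hu Hl => [|c rest] /=.
  by move=> _ _ E0; rewrite -E0 eqxx in ab.
move=> /andP[Hac Hrest] /andP[Hn Hu] Hl.
move: Hac; rewrite /adj_avoid => /existsP[e /andP[_ Hj]].
have ac : f v != c by apply: contraNneq Hn => ->; rewrite inE eqxx.
have [C [[HC eC] HU]] := Hcyc e.
have [e' [e'C ne [d Hj']]] := cycle_next HC eC Hj ac.
have Hcut := cactus_cut (Hcyc e) HC eC e'C ne Hj.
have CG : connect (adj_avoid H [set e; e']) (f v) (f w).
  apply: lift_connect; apply: Hconn; rewrite cards2; by case: (e != e').
have Hcb : connect (adj_avoid H [set e; e']) c (f w).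
  apply/connectP; exists rest => //.
  apply: (sub_in_path (P := predC1 (f v))) (_ : all (predC1 (f v)) (c :: rest)) Hrest.
  - move=> x y; rewrite !inE => xn yn; rewrite /adj_avoid => /existsP[g /andP[_ Hg]].
    apply/existsP; exists g; rewrite Hg andbT !inE.
    apply/negP => /orP[/eqP Eg|/eqP Eg]; subst g.
    + by case: (joins_eq Hj Hg) => -[E1 E2]; rewrite -?E1 -?E2 eqxx in xn yn.
    + by case: (joins_eq Hj' Hg) => -[E1 E2]; rewrite -?E1 -?E2 eqxx in xn yn.
  - by apply/allP => x xin /=; apply: contraNneq Hn => <-.
have : connect (adj_avoid H [set e; e']) (f v) c.
  apply: connect_trans CG _.
  by rewrite (sym_connect_sym (@adj_sym _ _ H _)).
by rewrite (negPf Hcut).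
Qed.
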